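(* Let $m\ge 1$ and consider any complete run of the labeled chip-firing process on $\mathbb{Z}$ starting with $2m$ chips at site $0$. For integers $x,y\ge 0$, let the firing move $(x,y)$ denote the $(\min(x,y)+1)$-th to last firing move performed at site $x-y$ in this run (when it exists). Let $(x,y)$ be a firing move with $0\le x,y\le m-1$. Then: (1) the firing move $(x,y)$ takes place after the firing moves $(x+1,y)$ and $(x,y+1)$, whenever these firing moves exist; (2) when the firing move $(x,y)$ occurs, there are exactly $2$ chips present at the site that is firing.
   Context: Labeled chip-firing on the infinite path graph $\mathbb{Z}$ (each integer $i$ adjacent to $i-1$ and $i+1$): $2m$ chips carrying distinct labels, labeled $-m,\dots,-1,1,\dots,m$, are placed at site $0$. A firing move consists of choosing two chips with labels $a<b$ located at a common site $i$, and moving chip $a$ to site $i-1$ and chip $b$ to site $i+1$. A complete run is a sequence of firing moves, each legal in the configuration it is applied to, ending in a configuration where all chips occupy distinct sites (so no further firing move is possible). *)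

(* Defs.v *)
From Stdlib Require Import ZArith List Lia.
Import ListNotations.
Open Scope Z_scope.

Definition labels (m : nat) : list Z :=
  map (fun i => - Z.of_nat i) (seq 1 m) ++ map Z.of_nat (seq 1 m).

Definition is_label (m : nat) (c : Z) : Prop := In c (labels m).

(* A configuration assigns to every label its site. *)
Definition config := Z -> Z.

Definition init_config : config := fun _ => 0.

(* A firing move is a pair (a, b) of labels, a < b: a goes left, b goes right. *)
Definition move := (Z * Z)%type.

Definition fire (p : config) (mv : move) : config :=
  fun c => if Z.eqb c (fst mv) then p (fst mv) - 1
           else if Z.eqb c (snd mv) then p (snd mv) + 1
           else p c.

Definition after (ms : list move) : config := fold_left fire ms init_config.

Definition config_before (ms : list move) (k : nat) : config :=
  after (firstn k ms).

Definition legal (m : nat) (p : config) (mv : move) : Prop :=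
  is_label m (fst mv) /\ is_label m (snd mv) /\ fst mv < snd mv /\
  p (fst mv) = p (snd mv).

Definition valid_run (m : nat) (ms : list move) : Prop :=
  forall k, (k < length ms)%nat ->
    legal m (config_before ms k) (nth k ms (0, 0)).

Definition complete_run (m : nat) (ms : list move) : Prop :=
  valid_run m ms /\
  forall c d, is_label m c -> is_label m d -> c <> d -> after ms c <> after ms d.

Definition fire_site (ms : list move) (k : nat) : Z :=
  config_before ms k (fst (nth k ms (0, 0))).

Definition moves_at (ms : list move) (s : Z) : list nat :=
  filter (fun k => Z.eqb (fire_site ms k) s) (seq 0 (length ms)).

(* firing move (x,y): the (min(x,y)+1)-th to last move at site x-y, if any;
   returned as its index in the run *)
Definition fmove (ms : list move) (x y : nat) : option nat :=
  nth_error (rev (moves_at ms (Z.of_nat x - Z.of_nat y))) (Nat.min x y).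

Definition chips_at (m : nat) (p : config) (s : Z) : nat :=
  length (filter (fun c => Z.eqb (p c) s) (labels m)).

(* Main.v *)
Require Import Defs.
From Stdlib Require Import ZArith List Lia.
Import ListNotations.
Open Scope Z_scope.

Lemma map_inj_NoDup (f : nat -> Z) (l : list nat) :
  (forall a b, f a = f b -> a = b) -> NoDup l -> NoDup (map f l).
Proof.
  intros Hf H; induction H; simpl; constructor; auto.
  intros Hin; apply in_map_iff in Hin as [y [Hy Hy']].
  apply Hf in Hy; subst; auto.
Qed.

Lemma labels_NoDup m : NoDup (labels m).
Proof.
  unfold labels; apply NoDup_app.
  - apply map_inj_NoDup; [intros; lia| apply seq_NoDup].
  - apply map_inj_NoDup; [intros; lia| apply seq_NoDup].
  - intros a H1 H2. apply in_map_iff in H1 as [i [<- Hi]].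
    apply in_map_iff in H2 as [j [Hj Hj']]. apply in_seq in Hi; apply in_seq in Hj'. lia.
Qed.

Lemma labels_length m : length (labels m) = (2 * m)%nat.
Proof. unfold labels. rewrite length_app, !length_map, length_seq. lia. Qed.

Lemma two_in (L : list Z) a b : In a L -> In b L -> a <> b -> (2 <= length L)%nat.
Proof.
  destruct L as [|c [|d L]]; simpl; intros; try lia; intuition congruence.
Qed.

Definition b2z (b : bool) : Z := if b then 1 else 0.

Lemma filter_len_diff (L : list Z) (f g : Z -> bool) a b :
  NoDup L -> a <> b -> (forall c, c <> a -> c <> b -> f c = g c) ->
  Z.of_nat (length (filter f L)) - Z.of_nat (length (filter g L)) =
  (if in_dec Z.eq_dec a L then b2z (f a) - b2z (g a) else 0) +
  (if in_dec Z.eq_dec b L then b2z (f b) - b2z (g b) else 0).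
Proof.
  intros HN Hab Hfg. induction HN as [|c L Hc HN IH]; [simpl; lia|].
  simpl filter.
  assert (Hlen : forall (h : Z -> bool), Z.of_nat (length (if h c then c :: filter h L else filter h L))
     = b2z (h c) + Z.of_nat (length (filter h L))).
  { intros h; destruct (h c); cbn [length b2z]; [rewrite Nat2Z.inj_succ|]; lia. }
  rewrite !Hlen.
  destruct (Z.eq_dec c a) as [->|Hca].
  - assert (Hb' : b <> a) by congruence.
    destruct (in_dec Z.eq_dec a (a :: L)) as [_|Hn]; [|simpl in Hn; tauto].
    destruct (in_dec Z.eq_dec a L) as [Hn|_]; [tauto|].
    destruct (in_dec Z.eq_dec b (a :: L)) as [Hb|Hb];
    destruct (in_dec Z.eq_dec b L) as [Hb2|Hb2]; simpl in Hb; try (exfalso; intuition congruence); lia.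
  - destruct (Z.eq_dec c b) as [->|Hcb].
    + destruct (in_dec Z.eq_dec b (b :: L)) as [_|Hn]; [|simpl in Hn; tauto].
      destruct (in_dec Z.eq_dec b L) as [Hn|_]; [tauto|].
      destruct (in_dec Z.eq_dec a (b :: L)) as [Ha|Ha];
      destruct (in_dec Z.eq_dec a L) as [Ha2|Ha2]; simpl in Ha; try (exfalso; intuition congruence); lia.
    + rewrite (Hfg c) by auto.
      destruct (in_dec Z.eq_dec a (c :: L)) as [Ha|Ha];
      destruct (in_dec Z.eq_dec a L) as [Ha2|Ha2]; simpl in Ha; try (exfalso; intuition congruence);
      destruct (in_dec Z.eq_dec b (c :: L)) as [Hb|Hb];
      destruct (in_dec Z.eq_dec b L) as [Hb2|Hb2]; simpl in Hb; try (exfalso; intuition congruence); lia.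
Qed.

Lemma firstn_snoc {A} (l : list A) k d : (k < length l)%nat ->
  firstn (S k) l = firstn k l ++ [nth k l d].
Proof.
  revert k; induction l as [|x l IH]; intros k Hk; simpl in *; [lia|].
  destruct k; simpl; [reflexivity|]. rewrite IH by lia. reflexivity.
Qed.

Lemma cb_S ms k : (k < length ms)%nat ->
  config_before ms (S k) = fire (config_before ms k) (nth k ms (0,0)).
Proof.
  intros Hk; unfold config_before, after. rewrite (firstn_snoc _ _ (0,0)) by auto.
  rewrite fold_left_app. reflexivity.
Qed.

Definition cnt (ms : list move) (k : nat) (s : Z) : Z :=
  Z.of_nat (length (filter (fun i => Z.eqb (fire_site ms i) s) (seq 0 k))).

Lemma cnt_S ms k s : cnt ms (S k) s = cnt ms k s + b2z (fire_site ms k =? s).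
Proof.
  unfold cnt. rewrite seq_S, filter_app, length_app, Nat2Z.inj_add. simpl filter.
  destruct (fire_site ms k =? s); simpl; lia.
Qed.

Lemma cnt_0 ms s : cnt ms 0 s = 0.
Proof. reflexivity. Qed.

Lemma cnt_mono ms k k' s : (k <= k')%nat -> cnt ms k s <= cnt ms k' s.
Proof.
  induction 1; [lia|]. rewrite cnt_S. unfold b2z. destruct (_ =? _); lia.
Qed.

Lemma cnt_nonneg ms k s : 0 <= cnt ms k s.
Proof. unfold cnt; lia. Qed.

Lemma chips_init m s : Z.of_nat (chips_at m init_config s) = if s =? 0 then 2 * Z.of_nat m else 0.
Proof.
  unfold chips_at, init_config.
  destruct (Z.eqb_spec 0 s) as [<-|Hs]; cbn [Z.eqb].
  - assert (H : forall L : list Z, filter (fun _ => true) L = L).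
    { induction L; simpl; congruence. }
    rewrite H, labels_length. lia.
  - rewrite (proj2 (Z.eqb_neq s 0)) by congruence.
    assert (H : forall L : list Z, filter (fun _ => false) L = []).
    { induction L; simpl; congruence. }
    rewrite H. reflexivity.
Qed.

Lemma chips_fire m p a b s :
  In a (labels m) -> In b (labels m) -> a <> b ->
  Z.of_nat (chips_at m (fire p (a, b)) s) =
  Z.of_nat (chips_at m p s) + b2z (p a - 1 =? s) - b2z (p a =? s)
    + b2z (p b + 1 =? s) - b2z (p b =? s).
Proof.
  intros Ha Hb Hab. unfold chips_at.
  pose proof (filter_len_diff (labels m) (fun c => fire p (a, b) c =? s) (fun c => p c =? s) a b
     (labels_NoDup m) Hab) as H.
  assert (Hfg : forall c, c <> a -> c <> b -> (fire p (a, b) c =? s) = (p c =? s)).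
  { intros c H1 H2. unfold fire; simpl. rewrite (proj2 (Z.eqb_neq c a) H1), (proj2 (Z.eqb_neq c b) H2). reflexivity. }
  specialize (H Hfg).
  destruct (in_dec Z.eq_dec a (labels m)); [|contradiction].
  destruct (in_dec Z.eq_dec b (labels m)); [|contradiction].
  cbv [fire fst snd] in H. rewrite Z.eqb_refl in H.
  rewrite (proj2 (Z.eqb_neq b a)) in H by congruence. rewrite Z.eqb_refl in H. cbv [fire fst snd]. lia.
Qed.

Definition chipsZ m ms k s : Z := Z.of_nat (chips_at m (config_before ms k) s).

Lemma fire_site_eq m ms k : valid_run m ms -> (k < length ms)%nat ->
  let p := config_before ms k in let mv := nth k ms (0,0) in
  is_label m (fst mv) /\ is_label m (snd mv) /\ fst mv < snd mv /\
  fire_site ms k = p (fst mv) /\ fire_site ms k = p (snd mv).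
Proof.
  intros Hv Hk p mv. destruct (Hv k Hk) as (H1 & H2 & H3 & H4).
  unfold fire_site. fold p mv. repeat split; auto.
Qed.

Lemma chips_formula m ms : valid_run m ms -> forall k, (k <= length ms)%nat -> forall s,
  chipsZ m ms k s = (if s =? 0 then 2 * Z.of_nat m else 0)
    + cnt ms k (s-1) + cnt ms k (s+1) - 2 * cnt ms k s.
Proof.
  intros Hv k. induction k as [|k IH]; intros Hk s.
  - unfold chipsZ, config_before, after. simpl firstn. simpl fold_left.
    rewrite chips_init, !cnt_0. lia.
  - pose proof (fire_site_eq m ms k Hv ltac:(lia)) as (Ha & Hb & Hab & E1 & E2).
    unfold chipsZ. rewrite cb_S by lia.
    destruct (nth k ms (0,0)) as [a b] eqn:Emv. cbn [fst snd] in *.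
    rewrite chips_fire by (auto || lia).
    fold (chipsZ m ms k s). rewrite IH by lia. rewrite !cnt_S.
    rewrite <- E1, <- E2. unfold b2z.
    destruct (Z.eqb_spec (fire_site ms k - 1) s);
    destruct (Z.eqb_spec (fire_site ms k + 1) s);
    destruct (Z.eqb_spec (fire_site ms k) s);
    destruct (Z.eqb_spec (fire_site ms k) (s-1));
    destruct (Z.eqb_spec (fire_site ms k) (s+1)); destruct (s =? 0); lia.
Qed.

Lemma chips_ge2 m ms k : valid_run m ms -> (k < length ms)%nat ->
  2 <= chipsZ m ms k (fire_site ms k).
Proof.
  intros Hv Hk.
  pose proof (fire_site_eq m ms k Hv Hk) as (Ha & Hb & Hab & E1 & E2).
  unfold chipsZ, chips_at.
  assert (2 <= length (filter (fun c => (config_before ms k c =? fire_site ms k)%Z) (labels m)))%nat.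
  { apply (two_in _ (fst (nth k ms (0,0))) (snd (nth k ms (0,0)))).
    - apply filter_In; split; auto. apply Z.eqb_eq; auto.
    - apply filter_In; split; auto. apply Z.eqb_eq; auto.
    - lia. }
  lia.
Qed.

Definition V (m : nat) (s : Z) : Z := Z.max 0 (Z.of_nat m - Z.abs s).
Definition U (m : nat) (s : Z) : Z := V m s * (V m s + 1) / 2.
Definition Fstd (m : nat) (s : Z) : Z :=
  if s =? 0 then 0 else if Z.abs s <=? Z.of_nat m then 1 else 0.

Lemma U2 m s : 2 * U m s = V m s * (V m s + 1).
Proof.
  unfold U. destruct (Z.Even_or_Odd (V m s)) as [[q Hq]|[q Hq]]; rewrite Hq.
  - replace (2 * q * (2 * q + 1)) with ((q * (2 * q + 1)) * 2) by ring.
    rewrite Z.div_mul by lia. ring.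
  - replace ((2 * q + 1) * (2 * q + 1 + 1)) with (((2 * q + 1) * (q + 1)) * 2) by ring.
    rewrite Z.div_mul by lia. ring.
Qed.

Lemma U_ge_V m s : V m s <= U m s.
Proof. pose proof (U2 m s). assert (0 <= V m s) by (unfold V; lia). nia. Qed.

Lemma U_zero m s : Z.of_nat m <= Z.abs s -> U m s = 0.
Proof. intros H. pose proof (U2 m s). assert (V m s = 0) by (unfold V; lia). nia. Qed.

Lemma U_lap m s : (if s =? 0 then 2 * Z.of_nat m else 0) + U m (s-1) + U m (s+1) - 2 * U m s = Fstd m s.
Proof.
  pose proof (U2 m (s-1)) as A1. pose proof (U2 m (s+1)) as A2. pose proof (U2 m s) as A3.
  unfold Fstd.
  assert (Hv : forall t, V m t = Z.max 0 (Z.of_nat m - Z.abs t)) by reflexivity.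
  destruct (Z.eqb_spec s 0) as [->|Hs].
  - destruct (Z.eq_dec (Z.of_nat m) 0).
    + rewrite (Hv (0-1)), (Hv (0+1)), (Hv 0) in *.
      replace (Z.max 0 (Z.of_nat m - Z.abs (0-1))) with 0 in * by lia.
      replace (Z.max 0 (Z.of_nat m - Z.abs (0+1))) with 0 in * by lia.
      replace (Z.max 0 (Z.of_nat m - Z.abs 0)) with 0 in * by lia. lia.
    + rewrite (Hv (0-1)), (Hv (0+1)), (Hv 0) in *.
      replace (Z.max 0 (Z.of_nat m - Z.abs (0-1))) with (Z.of_nat m - 1) in * by lia.
      replace (Z.max 0 (Z.of_nat m - Z.abs (0+1))) with (Z.of_nat m - 1) in * by lia.
      replace (Z.max 0 (Z.of_nat m - Z.abs 0)) with (Z.of_nat m) in * by lia. nia.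
  - rewrite (Hv (s-1)), (Hv (s+1)), (Hv s) in *.
    destruct (Z.leb_spec (Z.abs s) (Z.of_nat m)).
    + destruct (Z.eq_dec (Z.abs s) (Z.of_nat m)).
      * destruct (Z_lt_le_dec 0 s).
        -- replace (Z.max 0 (Z.of_nat m - Z.abs (s-1))) with 1 in * by lia.
           replace (Z.max 0 (Z.of_nat m - Z.abs (s+1))) with 0 in * by lia.
           replace (Z.max 0 (Z.of_nat m - Z.abs s)) with 0 in * by lia. lia.
        -- replace (Z.max 0 (Z.of_nat m - Z.abs (s-1))) with 0 in * by lia.
           replace (Z.max 0 (Z.of_nat m - Z.abs (s+1))) with 1 in * by lia.
           replace (Z.max 0 (Z.of_nat m - Z.abs s)) with 0 in * by lia. lia.
      * destruct (Z_lt_le_dec 0 s).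
        -- replace (Z.max 0 (Z.of_nat m - Z.abs (s-1))) with (Z.of_nat m - s + 1) in * by lia.
           replace (Z.max 0 (Z.of_nat m - Z.abs (s+1))) with (Z.of_nat m - s - 1) in * by lia.
           replace (Z.max 0 (Z.of_nat m - Z.abs s)) with (Z.of_nat m - s) in * by lia. nia.
        -- replace (Z.max 0 (Z.of_nat m - Z.abs (s-1))) with (Z.of_nat m + s - 1) in * by lia.
           replace (Z.max 0 (Z.of_nat m - Z.abs (s+1))) with (Z.of_nat m + s + 1) in * by lia.
           replace (Z.max 0 (Z.of_nat m - Z.abs s)) with (Z.of_nat m + s) in * by lia. nia.
    + replace (Z.max 0 (Z.of_nat m - Z.abs (s-1))) with 0 in * by lia.
      replace (Z.max 0 (Z.of_nat m - Z.abs (s+1))) with 0 in * by lia.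
      replace (Z.max 0 (Z.of_nat m - Z.abs s)) with 0 in * by lia. lia.
Qed.

Lemma Fstd_le1 m s : Fstd m s <= 1.
Proof. unfold Fstd; destruct (s =? 0); [lia|]; destruct (_ <=? _); lia. Qed.

Lemma cnt_le_U m ms : valid_run m ms -> forall k, (k <= length ms)%nat -> forall s, cnt ms k s <= U m s.
Proof.
  intros Hv k; induction k as [|k IH]; intros Hk s.
  - rewrite cnt_0. pose proof (U_ge_V m s). unfold V in *. lia.
  - rewrite cnt_S. unfold b2z.
    destruct (Z.eqb_spec (fire_site ms k) s) as [<-|]; [|specialize (IH ltac:(lia) s); lia].
    pose proof (chips_ge2 m ms k Hv ltac:(lia)) as H2.
    rewrite (chips_formula m ms Hv k ltac:(lia)) in H2.
    pose proof (U_lap m (fire_site ms k)). pose proof (Fstd_le1 m (fire_site ms k)).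
    pose proof (IH ltac:(lia) (fire_site ms k - 1)).
    pose proof (IH ltac:(lia) (fire_site ms k + 1)).
    pose proof (IH ltac:(lia) (fire_site ms k)).
    lia.
Qed.

Lemma chips_end_le1 m ms : complete_run m ms -> forall s, chipsZ m ms (length ms) s <= 1.
Proof.
  intros [Hv Hd] s. unfold chipsZ, config_before. rewrite firstn_all. unfold chips_at.
  pose proof (NoDup_filter (fun c => after ms c =? s) (labels_NoDup m)) as HN.
  assert (Hin : forall c, In c (filter (fun c => after ms c =? s) (labels m)) -> is_label m c /\ after ms c = s).
  { intros c Hc. apply filter_In in Hc as [H1 H2]. split; [exact H1|]. apply Z.eqb_eq; auto. }
  destruct (filter (fun c => after ms c =? s) (labels m)) as [|c [|d l]] eqn:E; simpl; try lia.
  exfalso. inversion HN; subst. 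
  destruct (Hin c) as [Hc1 Hc2]; [simpl; auto|].
  destruct (Hin d) as [Hd1 Hd2]; [simpl; auto|].
  apply (Hd c d Hc1 Hd1).
  - intros ->. apply H1. simpl; auto.
  - congruence.
Qed.

Lemma half_line (d : Z -> Z) (M : Z) : 0 <= M ->
  (forall s, M <= s -> d s = 0) ->
  (forall s, 1 <= s <= M -> 0 <= d (s-1) + d (s+1) - 2 * d s) ->
  (forall s, 0 <= s -> d (s+1) - d s <= 0) /\
  (d 1 = d 0 -> forall s, 0 <= s -> d s = 0).
Proof.
  intros HM H0 He.
  assert (A : forall s, 0 <= s -> d (s+1) - d s <= 0).
  { assert (forall n : nat, forall s, 0 <= s -> M - s = Z.of_nat n -> d (s+1) - d s <= 0).
    { induction n as [|n IH]; intros s Hs Hn.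
      - rewrite (H0 s), (H0 (s+1)) by lia. lia.
      - specialize (IH (s+1) ltac:(lia) ltac:(lia)).
        specialize (He (s+1) ltac:(lia)).
        replace (s+1-1) with s in He by ring. replace (s+1+1) with (s+2) in *|- by ring.
        lia. }
    intros s Hs. destruct (Z_le_gt_dec M s).
    - rewrite (H0 s), (H0 (s+1)) by lia. lia.
    - apply (H (Z.to_nat (M - s))); lia. }
  split; [exact A|].
  intros H10.
  assert (B : forall n : nat, d (Z.of_nat n + 1) - d (Z.of_nat n) >= 0).
  { induction n as [|n IH]; [simpl; lia|].
    rewrite Nat2Z.inj_succ. destruct (Z_le_gt_dec (Z.of_nat n + 1) M).
    - specialize (He (Z.of_nat n + 1) ltac:(lia)).
      replace (Z.of_nat n + 1 - 1) with (Z.of_nat n) in He by ring.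
      unfold Z.succ. lia.
    - unfold Z.succ. rewrite (H0 (Z.of_nat n + 1)), (H0 (Z.of_nat n + 1 + 1)) by lia. lia. }
  assert (C : forall s, 0 <= s -> d s = d (s+1)).
  { intros s Hs. specialize (A s Hs). specialize (B (Z.to_nat s)).
    rewrite Z2Nat.id in B by lia. lia. }
  assert (D : forall n : nat, forall s, 0 <= s -> M <= s + Z.of_nat n -> d s = 0).
  { induction n as [|n IH]; intros s Hs Hn.
    - apply H0; lia.
    - rewrite (C s Hs). apply IH; lia. }
  intros s Hs. apply (D (Z.to_nat M)); lia.
Qed.

Lemma odometer_final m ms : complete_run m ms -> forall s, cnt ms (length ms) s = U m s.
Proof.
  intros Hc. pose proof Hc as [Hv _].
  set (N := length ms).
  set (d := fun s => U m s - cnt ms N s).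
  assert (Hd0 : forall s, 0 <= d s).
  { intros s. unfold d. pose proof (cnt_le_U m ms Hv N (le_n _) s). lia. }
  assert (Hdz : forall s, Z.of_nat m <= Z.abs s -> d s = 0).
  { intros s Hs. unfold d. rewrite U_zero by auto.
    pose proof (cnt_le_U m ms Hv N (le_n _) s). rewrite U_zero in H by auto.
    pose proof (cnt_nonneg ms N s). lia. }
  assert (He : forall s, d (s-1) + d (s+1) - 2 * d s = Fstd m s - chipsZ m ms N s).
  { intros s. unfold d. rewrite (chips_formula m ms Hv N (le_n _)). rewrite <- (U_lap m s). lia. }
  assert (Hle : forall s, chipsZ m ms N s <= 1) by (apply chips_end_le1; auto).
  assert (Hge : forall s, 0 <= chipsZ m ms N s) by (intros; unfold chipsZ; lia).
  assert (HF1 : forall s, 1 <= Z.abs s <= Z.of_nat m -> Fstd m s = 1).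
  { intros s Hs. unfold Fstd. destruct (Z.eqb_spec s 0); [lia|].
    destruct (Z.leb_spec (Z.abs s) (Z.of_nat m)); lia. }
  pose proof (half_line d (Z.of_nat m) ltac:(lia)
     ltac:(intros; apply Hdz; lia)
     ltac:(intros s Hs; rewrite He; specialize (Hle s); rewrite HF1 by lia; lia)) as [P1 P2].
  pose proof (half_line (fun s => d (-s)) (Z.of_nat m) ltac:(lia)
     ltac:(intros; apply Hdz; lia)) as Q.
  assert (Q' : forall s, 1 <= s <= Z.of_nat m -> 0 <= d (- (s-1)) + d (- (s+1)) - 2 * d (- s)).
  { intros s Hs. specialize (He (-s)). replace (-s-1) with (-(s+1)) in He by ring.
    replace (-s+1) with (-(s-1)) in He by ring.
    specialize (Hle (-s)). rewrite HF1 in He by lia. lia. }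
  destruct (Q Q') as [Q1 Q2]. clear Q Q'.
  specialize (P1 0 ltac:(lia)). specialize (Q1 0 ltac:(lia)). simpl in P1, Q1.
  pose proof (He 0) as E0. replace (0-1) with (-1) in E0 by ring. replace (0+1) with 1 in E0 by ring. replace (Fstd m 0) with 0 in E0 by reflexivity. specialize (Hle 0).
  assert (Hall : forall s, d s = 0).
  { assert (Hboth : (forall s, 0 <= s -> d s = 0) /\ (forall s, 0 <= s -> d (-s) = 0)).
    { destruct (Z.eq_dec (d 1) (d 0)) as [E|E].
      - pose proof (P2 E) as P. split; [exact P|]. apply Q2. simpl.
        pose proof (P 0 ltac:(lia)). pose proof (Hd0 (-1)). lia.
      - assert (E' : d (- (1)) = d (- 0)) by (simpl; lia).
        pose proof (Q2 E') as Q. split; [|exact Q]. apply P2.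
        pose proof (Q 0 ltac:(lia)). simpl in H. pose proof (Hd0 1). lia. }
    destruct Hboth as [B1 B2]. intros s. destruct (Z_le_gt_dec 0 s).
    - apply B1; lia.
    - replace s with (- - s) by ring. apply B2. lia. }
  intros s. specialize (Hall s). unfold d in Hall. lia.
Qed.

Lemma moves_at_spec ms s j k :
  nth_error (rev (moves_at ms s)) j = Some k ->
  (k < length ms)%nat /\ fire_site ms k = s /\
  cnt ms (length ms) s - cnt ms k s = Z.of_nat j + 1.
Proof.
  intros H. set (N := length ms) in *.
  assert (Hin : In k (moves_at ms s)).
  { apply in_rev. eapply nth_error_In; eauto. }
  unfold moves_at in Hin. apply filter_In in Hin as [Hk Pk].
  apply in_seq in Hk. apply Z.eqb_eq in Pk.
  split; [lia|]. split; [exact Pk|].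
  assert (Hs : seq 0 N = seq 0 k ++ k :: seq (S k) (N - k - 1)).
  { replace (k :: seq (S k) (N - k - 1)) with (seq (0 + k) (N - k)).
    - rewrite <- seq_app. f_equal. lia.
    - assert (E : (N - k = S (N - k - 1))%nat) by lia.
      rewrite E at 1. simpl. do 2 f_equal. }
  unfold moves_at, cnt in *. fold N in H. rewrite Hs in H |- *.
  rewrite filter_app in H |- *. cbn [filter] in H |- *.
  rewrite (proj2 (Z.eqb_eq _ _) Pk) in H |- *.
  set (FA := filter (fun i => fire_site ms i =? s) (seq 0 k)) in *.
  set (FB := filter (fun i => fire_site ms i =? s) (seq (S k) (N - k - 1))) in *.
  rewrite rev_app_distr in H. cbn [rev] in H. rewrite <- app_assoc in H. cbn [app] in H.
  assert (Hj : j = length (rev FB)).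
  { destruct (Nat.lt_ge_cases j (length (rev FB))) as [Hl|Hl].
    - rewrite nth_error_app1 in H by auto. apply nth_error_In in H.
      apply in_rev in H. unfold FB in H. apply filter_In in H as [H _]. apply in_seq in H. lia.
    - rewrite nth_error_app2 in H by auto.
      destruct (j - length (rev FB))%nat eqn:E; [lia|].
      simpl in H. apply nth_error_In in H. apply in_rev in H. unfold FA in H.
      apply filter_In in H as [H _]. apply in_seq in H. lia. }
  rewrite length_rev in Hj. subst j.
  rewrite length_app. simpl length. lia.
Qed.

Definition hh m ms k s := U m s - cnt ms k s.
Definition GG m ms k s := Z.min (hh m ms k s) (Z.of_nat m - Z.abs s).
Definition Young m ms k :=
  (forall s t, 0 <= s -> s <= Z.of_nat m - 1 -> t = s + 1 -> 0 <= GG m ms k s - GG m ms k t <= 1) /\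
  (forall s t, -(Z.of_nat m - 1) <= s -> s <= 0 -> t = s - 1 -> 0 <= GG m ms k s - GG m ms k t <= 1).

Lemma chips_hh m ms k s : valid_run m ms -> (k <= length ms)%nat ->
  chipsZ m ms k s = Fstd m s + 2 * hh m ms k s - hh m ms k (s-1) - hh m ms k (s+1).
Proof.
  intros Hv Hk. rewrite (chips_formula m ms Hv k Hk). rewrite <- (U_lap m s). unfold hh. lia.
Qed.

Lemma local m ms k s0 : valid_run m ms -> (k < length ms)%nat -> Young m ms k ->
  s0 = fire_site ms k -> hh m ms k s0 <= Z.of_nat m - Z.abs s0 ->
  (0 < s0 -> forall u, (u = s0 + 1 -> hh m ms k u = hh m ms k s0 - 1) /\
                       (u = s0 - 1 -> hh m ms k u = hh m ms k s0)) /\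
  (s0 = 0 -> forall u, (u = 1 \/ u = -1) -> hh m ms k u = hh m ms k s0 - 1) /\
  (s0 < 0 -> forall u, (u = s0 - 1 -> hh m ms k u = hh m ms k s0 - 1) /\
                       (u = s0 + 1 -> hh m ms k u = hh m ms k s0)) /\
  chipsZ m ms k s0 = 2.
Proof.
  intros Hv Hk [HYp HYn] Es0 Hle.
  pose proof (chips_ge2 m ms k Hv Hk) as C2. rewrite <- Es0 in C2.
  pose proof (chips_hh m ms k s0 Hv ltac:(lia)) as CF.
  assert (H1 : 1 <= hh m ms k s0).
  { pose proof (cnt_le_U m ms Hv (S k) Hk s0). rewrite cnt_S in H.
    rewrite <- Es0, Z.eqb_refl in H. unfold hh, b2z in *. lia. }
  assert (HF : Fstd m s0 = if s0 =? 0 then 0 else 1).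
  { unfold Fstd. destruct (s0 =? 0); auto. destruct (Z.leb_spec (Z.abs s0) (Z.of_nat m)); lia. }
  assert (Hnn : forall u, 0 <= hh m ms k u).
  { intros u. pose proof (cnt_le_U m ms Hv k ltac:(lia) u). unfold hh; lia. }
  pose proof (Hnn (s0-1)). pose proof (Hnn (s0+1)).
  destruct (Z.lt_trichotomy s0 0) as [Hn|[Hz|Hp]].
  - pose proof (HYn s0 (s0-1) ltac:(lia) ltac:(lia) eq_refl) as Y1.
    pose proof (HYn (s0+1) s0 ltac:(lia) ltac:(lia) ltac:(lia)) as Y2.
    rewrite (proj2 (Z.eqb_neq s0 0)) in HF by lia.
    unfold GG in *.
    split; [intros; lia|]. split; [intros; lia|]. split; [|lia].
    intros _ u; split; intros ->; lia.
  - rewrite Hz in *.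
    pose proof (HYn 0 (0-1) ltac:(lia) ltac:(lia) eq_refl) as Y1.
    pose proof (HYp 0 (0+1) ltac:(lia) ltac:(lia) eq_refl) as Y2.
    simpl in HF. unfold GG in *.
    replace (0-1) with (-1) in * by ring. replace (0+1) with 1 in * by ring.
    split; [intros; lia|]. split; [|split; [intros; lia|lia]].
    intros _ u [-> | ->]; lia.
  - pose proof (HYp s0 (s0+1) ltac:(lia) ltac:(lia) eq_refl) as Y1.
    pose proof (HYp (s0-1) s0 ltac:(lia) ltac:(lia) ltac:(lia)) as Y2.
    rewrite (proj2 (Z.eqb_neq s0 0)) in HF by lia.
    unfold GG in *.
    split; [|split; [intros; lia|split; [intros; lia|lia]]].
    intros _ u; split; intros ->; lia.
Qed.

Lemma Young0 m ms : Young m ms 0.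
Proof.
  unfold Young, GG, hh. split; intros s t H1 H2 ->; rewrite !cnt_0;
  pose proof (U_ge_V m s); pose proof (U_ge_V m (s+1)); pose proof (U_ge_V m (s-1));
  unfold V in *; lia.
Qed.

Lemma Young_step m ms k : valid_run m ms -> (k < length ms)%nat -> Young m ms k -> Young m ms (S k).
Proof.
  intros Hv Hk HY. pose proof HY as [HYp HYn].
  remember (fire_site ms k) as s0 eqn:Es0.
  assert (H1 : 1 <= hh m ms k s0).
  { pose proof (cnt_le_U m ms Hv (S k) Hk s0). rewrite cnt_S in H.
    rewrite <- Es0, Z.eqb_refl in H. unfold hh, b2z in *. lia. }
  destruct (Z_le_gt_dec (hh m ms k s0) (Z.of_nat m - Z.abs s0)) as [Hle|Hgt].
  - pose proof (local m ms k s0 Hv Hk HY Es0 Hle) as (L1 & L2 & L3 & _).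
    assert (A : (0 < s0 -> hh m ms k (s0+1) = hh m ms k s0 - 1 /\ hh m ms k (s0-1) = hh m ms k s0) /\
                (s0 = 0 -> hh m ms k (s0+1) = hh m ms k s0 - 1 /\ hh m ms k (s0-1) = hh m ms k s0 - 1) /\
                (s0 < 0 -> hh m ms k (s0-1) = hh m ms k s0 - 1 /\ hh m ms k (s0+1) = hh m ms k s0)).
    { split; [|split]; intros Hs; split.
      - apply (L1 Hs); auto.
      - apply (L1 Hs); auto.
      - apply (L2 Hs); lia.
      - apply (L2 Hs); lia.
      - apply (L3 Hs); auto.
      - apply (L3 Hs); auto. }
    clear L1 L2 L3.
    assert (B : Z.abs s0 <= Z.of_nat m - 1) by lia.
    split; intros s t Hs1 Hs2 Ht.
    + specialize (HYp s t Hs1 Hs2 Ht).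
      unfold GG, hh in *. rewrite !cnt_S. rewrite <- Es0.
      destruct (Z.eqb_spec s0 s) as [e|e]; destruct (Z.eqb_spec s0 t) as [f|f]; cbn [b2z].
      * lia.
      * subst t. subst s. destruct (Z.lt_trichotomy s0 0) as [Q|[Q|Q]]; [destruct (proj2 (proj2 A) Q) | destruct (proj1 (proj2 A) Q) | destruct (proj1 A Q)]; lia.
      * assert (s = s0 - 1) by lia. subst s. subst t. replace (s0 - 1 + 1) with s0 in * by ring. destruct (Z.lt_trichotomy s0 0) as [Q|[Q|Q]]; [destruct (proj2 (proj2 A) Q) | destruct (proj1 (proj2 A) Q) | destruct (proj1 A Q)]; lia.
      * lia.
    + specialize (HYn s t Hs1 Hs2 Ht).
      unfold GG, hh in *. rewrite !cnt_S. rewrite <- Es0.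
      destruct (Z.eqb_spec s0 s) as [e|e]; destruct (Z.eqb_spec s0 t) as [f|f]; cbn [b2z].
      * lia.
      * subst t. subst s. destruct (Z.lt_trichotomy s0 0) as [Q|[Q|Q]]; [destruct (proj2 (proj2 A) Q) | destruct (proj1 (proj2 A) Q) | destruct (proj1 A Q)]; lia.
      * assert (s = s0 + 1) by lia. subst s. subst t. replace (s0 + 1 - 1) with s0 in * by ring. destruct (Z.lt_trichotomy s0 0) as [Q|[Q|Q]]; [destruct (proj2 (proj2 A) Q) | destruct (proj1 (proj2 A) Q) | destruct (proj1 A Q)]; lia.
      * lia.
  - split; intros s t Hs1 Hs2 Ht.
    + specialize (HYp s t Hs1 Hs2 Ht).
      unfold GG, hh in *. rewrite !cnt_S. rewrite <- Es0.
      destruct (Z.eqb_spec s0 s) as [e|e]; destruct (Z.eqb_spec s0 t) as [f|f]; cbn [b2z];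
        [lia | rewrite <- e in *; lia | rewrite <- f in *; lia | lia].
    + specialize (HYn s t Hs1 Hs2 Ht).
      unfold GG, hh in *. rewrite !cnt_S. rewrite <- Es0.
      destruct (Z.eqb_spec s0 s) as [e|e]; destruct (Z.eqb_spec s0 t) as [f|f]; cbn [b2z];
        [lia | rewrite <- e in *; lia | rewrite <- f in *; lia | lia].
Qed.

Lemma Young_all m ms : valid_run m ms -> forall k, (k <= length ms)%nat -> Young m ms k.
Proof.
  intros Hv k; induction k as [|k IH]; intros Hk.
  - apply Young0.
  - apply Young_step; auto. apply IH; lia.
Qed.

Theorem lemma2p6 (m : nat) (ms : list move) (x y k : nat) :
  (1 <= m)%nat ->
  complete_run m ms ->
  (x <= m - 1)%nat -> (y <= m - 1)%nat ->
  fmove ms x y = Some k ->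
  (forall k', fmove ms (S x) y = Some k' -> (k' < k)%nat) /\
  (forall k', fmove ms x (S y) = Some k' -> (k' < k)%nat) /\
  chips_at m (config_before ms k) (Z.of_nat x - Z.of_nat y)%Z = 2%nat.
Proof.
  intros Hm Hc Hx Hy Hf. pose proof Hc as [Hv _].
  unfold fmove in Hf. apply moves_at_spec in Hf as (Hk & Hs & Hcnt).
  rewrite (odometer_final m ms Hc) in Hcnt.
  set (s := Z.of_nat x - Z.of_nat y) in *.
  assert (Hh : hh m ms k s = Z.of_nat (Nat.min x y) + 1) by (unfold hh; lia).
  pose proof (local m ms k s Hv Hk (Young_all m ms Hv k ltac:(lia)) (eq_sym Hs) ltac:(lia))
    as (L1 & L2 & L3 & Lc).
  split; [|split].
  - intros k' Hf'. unfold fmove in Hf'. apply moves_at_spec in Hf' as (Hk' & Hs' & Hcnt').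
    rewrite (odometer_final m ms Hc) in Hcnt'.
    set (t := Z.of_nat (S x) - Z.of_nat y) in *.
    destruct (Nat.lt_ge_cases k' k) as [Hlt|Hge]; [exact Hlt|exfalso].
    assert (k' <> k) by (intros ->; unfold s, t in *; lia).
    pose proof (cnt_mono ms k k' t Hge) as Hmono.
    assert (Et : t = s + 1) by (unfold s, t; lia).
    destruct (Z.lt_trichotomy s 0) as [Q|[Q|Q]].
    + destruct (L3 Q t) as [_ E]. specialize (E Et). unfold hh in *. lia.
    + specialize (L2 Q t ltac:(lia)). unfold hh in *. lia.
    + destruct (L1 Q t) as [E _]. specialize (E Et). unfold hh in *. lia.
  - intros k' Hf'. unfold fmove in Hf'. apply moves_at_spec in Hf' as (Hk' & Hs' & Hcnt').
    rewrite (odometer_final m ms Hc) in Hcnt'.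
    set (t := Z.of_nat x - Z.of_nat (S y)) in *.
    destruct (Nat.lt_ge_cases k' k) as [Hlt|Hge]; [exact Hlt|exfalso].
    assert (k' <> k) by (intros ->; unfold s, t in *; lia).
    pose proof (cnt_mono ms k k' t Hge) as Hmono.
    assert (Et : t = s - 1) by (unfold s, t; lia).
    destruct (Z.lt_trichotomy s 0) as [Q|[Q|Q]].
    + destruct (L3 Q t) as [E _]. specialize (E Et). unfold hh in *. lia.
    + specialize (L2 Q t ltac:(lia)). unfold hh in *. lia.
    + destruct (L1 Q t) as [_ E]. specialize (E Et). unfold hh in *. lia.
  - unfold chipsZ in Lc. lia.
Qed.
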